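(* For $n>2$ and $1<k<n$, in $G=H_B(n,k)$: (1) the periphery $P(G)=\{v: e(v)=\mathrm{diam}(G)\}$ equals the set of all $r$-vertices of $V_2$ with $1\le r<n$; (2) the centre $C(G)=\{v: e(v)=\mathrm{rad}(G)\}$ equals the set of all $n$-vertices (which all lie in $V_2$).
   Context: Fix integers $n\ge 2$ and $1\le k<n$ and positive real numbers $x_1<x_2<\dots<x_n$. Let $\mathscr{B}_n=\{\pm x_1,\pm x_2,\dots,\pm x_{n-1},x_n\}$ (so $-x_n\notin\mathscr{B}_n$). Let $\phi(\mathscr{B}_n)$ be the family of all nonempty subsets $S\subseteq\mathscr{B}_n$ whose elements have pairwise distinct absolute values and whose element of largest absolute value is positive. Let $\mathscr{B}_n^+=\{x_1,\dots,x_n\}$, let $V_1$ be the set of all $k$-element subsets of $\mathscr{B}_n^+$, and let $V_2=\phi(\mathscr{B}_n)\setminus V_1$. For $A\in\phi(\mathscr{B}_n)$ put $A^\dagger=\{|a|:a\in A\}$. The bipartite Kneser B type-$k$ graph $H_B(n,k)$ is the simple graph with vertex set $V_1\cup V_2$ in which $X\in V_1$ and $Y\in V_2$ are adjacent if and only if $X\subseteq Y^\dagger$ or $Y^\dagger\subseteq X$, and there are no other edges. An $r$-vertex is a vertex having exactly $r$ elements. $e(v)$ denotes eccentricity. *)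

(* Defs.v *)
From HB Require Import structures.
From mathcomp Require Import all_boot.
Set Implicit Arguments. Unset Strict Implicit. Unset Printing Implicit Defensive.

(* Signed element (i, b) : 'I_n * bool encodes  x_(i+1)  if b = false and
   -x_(i+1) if b = true.  Since 0 < x_1 < ... < x_n, the absolute value of
   (i,b) is x_(i+1), and comparing absolute values = comparing indices. *)
Section HB.
Variables n k : nat.

Definition signed := ('I_n * bool)%type.

Definition phib (A : {set signed}) : bool :=
  [&& A != set0,
      (* only elements of B_n: -x_n is not allowed *)
      [forall p in A, (p.1 == n.-1 :> nat) ==> ~~ p.2],
      [forall p in A, forall q in A, (p.1 == q.1) ==> (p == q)] &
      [forall p in A, [forall q in A, q.1 <= p.1] ==> ~~ p.2]].

Definition vtx := {A : {set signed} | phib A}.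
HB.instance Definition _ := Finite.on vtx.

Definition dag (A : {set signed}) : {set 'I_n} := [set p.1 | p in A].

Definition inV1 (v : vtx) : bool :=
  [forall p in val v, ~~ p.2] && (#|val v| == k).
Definition inV2 (v : vtx) : bool := ~~ inV1 v.

Definition adjcond (X Y : vtx) : bool :=
  (dag (val X) \subset dag (val Y)) || (dag (val Y) \subset dag (val X)).

Definition adj (u v : vtx) : bool :=
  (inV1 u && inV2 v && adjcond u v) || (inV1 v && inV2 u && adjcond v u).

Fixpoint ball (u : vtx) (m : nat) : {set vtx} :=
  if m is m'.+1 then ball u m' :|: [set y | [exists x in ball u m', adj x y]]
  else [set u].

(* graph distance; #|{: vtx}|.+1 plays the role of infinity (unreachable) *)
Definition dist (u v : vtx) : nat :=
  find (fun m => v \in ball u m) (iota 0 #|{: vtx}|.+1).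

Definition ecc (u : vtx) : nat := \max_(v : vtx) dist u v.
Definition diam : nat := \max_(u : vtx) ecc u.
Definition rad : nat := \big[minn/#|{: vtx}|.+1]_(u : vtx) ecc u.

Definition periphery : {set vtx} := [set v | ecc v == diam].
Definition centre : {set vtx} := [set v | ecc v == rad].
End HB.

(* Main.v *)
Require Import Defs.
From mathcomp Require Import all_boot.
From mathcomp Require Import zify.

Set Implicit Arguments. Unset Strict Implicit. Unset Printing Implicit Defensive.

Lemma subset_card_ex (T : finType) (A : {set T}) m :
  m <= #|A| -> exists2 S : {set T}, S \subset A & #|S| = m.
Proof.
elim: m => [|m IH] h; first by exists set0; [exact: sub0set | exact: cards0].
have [S SA cS] := IH (ltnW h).
have : A :\: S != set0.
  by rewrite -card_gt0 cardsD (setIidPr SA) cS subn_gt0.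
case/set0Pn => x /setDP [xA xS]; exists (x |: S).
  by rewrite subUset sub1set xA SA.
by rewrite cardsU1 xS cS.
Qed.

Section Main.
Variables n k : nat.
Hypotheses (hn : 2 < n) (hk1 : 1 < k) (hkn : k < n).
Local Notation V := (vtx n).
Implicit Types u v x y : V.

Definition D (v : V) : {set 'I_n} := dag (val v).

Lemma card_D v : #|D v| = #|val v|.
Proof.
rewrite /D /dag card_in_imset // => p q pin qin e.
have := valP v; case/and4P=> _ _ /forall_inP H _.
by have /forall_inP/(_ q qin)/implyP/(_ (introT eqP e))/eqP := H p pin.
Qed.

Lemma cardv_le v : #|val v| <= n.
Proof. by rewrite -card_D; apply: leq_trans (max_card _) _; rewrite card_ord. Qed.

Lemma cardv_ge v : 0 < #|val v|.
Proof. by have := valP v; case/and4P; rewrite card_gt0. Qed.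

Definition posS (S : {set 'I_n}) : {set signed n} := [set (i, false) | i in S].

Lemma phib_pos S : S != set0 -> phib (posS S).
Proof.
move=> S0; apply/and4P; split.
- case/set0Pn: S0 => i iS; apply/set0Pn; exists (i,false); exact: imset_f.
- by apply/forall_inP => p /imsetP [i _ ->]; rewrite /= implybT.
- apply/forall_inP => p /imsetP [i _ ->]; apply/forall_inP => q /imsetP [j _ ->] /=.
  by apply/implyP => /eqP ->.
- by apply/forall_inP => p /imsetP [i _ ->]; rewrite /= implybT.
Qed.

Definition mkpos S (h : S != set0) : V := @exist _ (fun A => phib A) (posS S) (phib_pos h).

Lemma D_pos S (h : S != set0) : D (mkpos h) = S.
Proof.
apply/setP => i; apply/imsetP/idP => [[p /imsetP [j jS ->] ->] // | iS].
by exists (i,false) => //; apply: imset_f.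
Qed.

Lemma card_pos S (h : S != set0) : #|val (mkpos h)| = #|S|.
Proof. by rewrite -card_D D_pos. Qed.

Lemma inV1_pos S (h : S != set0) : inV1 k (mkpos h) = (#|S| == k).
Proof.
rewrite /inV1 card_pos (_ : [forall p in _, _] = true) //.
by apply/forall_inP => p /imsetP [i _ ->].
Qed.

Definition negS (B : {set 'I_n}) (m : 'I_n) : {set signed n} :=
  [set (i, i == m) | i in B].

Lemma phib_neg (B : {set 'I_n}) (m c : 'I_n) : m \in B -> c \in B -> m < c -> phib (negS B m).
Proof.
move=> mB cB mc; apply/and4P; split.
- apply/set0Pn; exists (m, true); apply/imsetP; exists m => //; by rewrite eqxx.
- apply/forall_inP => p /imsetP [i _ ->] /=; apply/implyP => /eqP ein.
  apply/negP => /eqP eim; subst i.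
  by have := ltn_ord c; lia.
- apply/forall_inP => p /imsetP [i _ ->]; apply/forall_inP => q /imsetP [j _ ->] /=.
  by apply/implyP => /eqP ->.
- apply/forall_inP => p /imsetP [i _ ->] /=; apply/implyP => /forall_inP H.
  apply/negP => /eqP eim; subst i.
  have := H (c, c == m); rewrite /= => /(_ (imset_f _ cB)).
  by rewrite leqNgt mc.
Qed.

Lemma exists_neg (B : {set 'I_n}) : 1 < #|B| -> exists v : V, D v = B /\ ~~ inV1 k v.
Proof.
case/card_gt1P => a [b [aB bB ab]].
have gen : forall m c, m \in B -> c \in B -> m < c -> exists v : V, D v = B /\ ~~ inV1 k v.
  move=> m c mB cB mc.
  exists (@exist _ (fun A => phib A) (negS B m) (phib_neg mB cB mc)); split.
    apply/setP => i; apply/imsetP/idP => [[p /imsetP [j jS ->] ->] // | iS].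
    by exists (i, i == m) => //; apply: imset_f.
  rewrite /inV1; apply/nandP; left; apply/forall_inP => /(_ (m, true)).
  by rewrite /= => /(_ _)/negP; apply => //; apply/imsetP; exists m; rewrite ?eqxx.
case: (ltngtP a b) => h; first exact: gen h.
  exact: gen h.
by move: ab; rewrite (val_inj h) eqxx.
Qed.

Lemma exists_kset (T : {set 'I_n}) :
  exists2 S : {set 'I_n}, #|S| = k & (S \subset T) || (T \subset S).
Proof.
case: (leqP k #|T|) => h.
  by have [S ST cS] := subset_card_ex h; exists S => //; rewrite ST.
have h2 : k - #|T| <= #|~: T|.
  have := cardsC T; rewrite card_ord; lia.
have [S' S'c cS'] := subset_card_ex h2.
exists (T :|: S'); last by rewrite subsetUl orbT.
rewrite cardsU cS'.
have -> : T :&: S' = set0.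
  by apply/eqP; rewrite setIC setI_eq0 disjoints_subset.
rewrite cards0; lia.
Qed.

Lemma adjE x y : adj k x y = (inV1 k x != inV1 k y) && adjcond x y.
Proof.
rewrite /adj /inV2; case: (inV1 k x); case: (inV1 k y) => //=; rewrite ?orbF //.
by rewrite /adjcond orbC.
Qed.

Lemma adjcondE x y : adjcond x y = (D x \subset D y) || (D y \subset D x).
Proof. by []. Qed.

Lemma nbr v : exists X : V, inV1 k X && adjcond X v.
Proof.
have [S cS HS] := exists_kset (D v).
have S0 : S != set0 by rewrite -card_gt0 cS; lia.
exists (mkpos S0); rewrite inV1_pos cS eqxx adjcondE D_pos; exact: HS.
Qed.

Lemma ball0E u x : x \in ball k u 0 -> x = u.
Proof. by rewrite /= inE => /eqP. Qed.

Lemma ball0 u : u \in ball k u 0.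
Proof. by rewrite /= inE. Qed.

Lemma ballS u m x : x \in ball k u m -> x \in ball k u m.+1.
Proof. by rewrite /= inE => ->. Qed.

Lemma ball_step u m x y : x \in ball k u m -> adj k x y -> y \in ball k u m.+1.
Proof.
move=> xb a; rewrite /= !inE; apply/orP; right; apply/exists_inP; exists x => //.
Qed.

Lemma ball_inv u m y : y \in ball k u m.+1 ->
  y \in ball k u m \/ exists2 x, x \in ball k u m & adj k x y.
Proof.
rewrite /= inE => /orP [->|]; first by left.
by rewrite inE => /exists_inP [x xb a]; right; exists x.
Qed.

Lemma ball_mono u m d x : x \in ball k u m -> x \in ball k u (m + d).
Proof. elim: d => [|d IH]; rewrite ?addn0 // addnS => xb; exact: ballS (IH xb). Qed.

Lemma dist_le u v m : v \in ball k u m -> dist k u v <= m.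
Proof.
rewrite /dist => vb.
case: (ltnP m (#|{: V}|.+1)) => hm.
  rewrite leqNgt; apply/negP => hf.
  have := before_find 0 hf; rewrite nth_iota // add0n => e.
  by rewrite e in vb.
have := find_size (fun m => v \in ball k u m) (iota 0 #|{: V}|.+1).
rewrite size_iota => h; exact: leq_trans h hm.
Qed.

Lemma dist_gt u v m : v \notin ball k u m -> m < #|{: V}|.+1 -> m < dist k u v.
Proof.
rewrite /dist => vb hm; rewrite ltnNge; apply/negP => hd.
have hs : find (fun m => v \in ball k u m) (iota 0 #|{: V}|.+1) < #|{: V}|.+1.
  exact: leq_ltn_trans hd hm.
have hh : has (fun m => v \in ball k u m) (iota 0 #|{: V}|.+1).
  by rewrite has_find size_iota.
have := nth_find 0 hh; rewrite nth_iota // add0n => vb'.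
by move: vb; rewrite -(subnKC hd) (ball_mono _ vb').
Qed.

Lemma ecc_le u m : (forall v, v \in ball k u m) -> ecc k u <= m.
Proof. by move=> H; apply/bigmax_leqP => v _; apply: dist_le. Qed.

Lemma ecc_gt u v m : v \notin ball k u m -> m < #|{: V}|.+1 -> m < ecc k u.
Proof.
move=> vb hm; rewrite /ecc.
have h1 := dist_gt vb hm.
have h2 := @leq_bigmax _ (fun w => dist k u w) v.
exact: leq_trans h1 h2.
Qed.

Lemma set1_neq0 (j : 'I_n) : [set j] != set0.
Proof. by apply/set0Pn; exists j; rewrite set11. Qed.

Definition single (j : 'I_n) : V := mkpos (set1_neq0 j).

Lemma single_V2 j : inV1 k (single j) = false.
Proof. by rewrite inV1_pos cards1; apply/eqP; lia. Qed.

Lemma card_V : n <= #|{: V}|.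
Proof.
have inj : injective single.
  by move=> i j e; apply: set1_inj; rewrite -(D_pos (set1_neq0 i)) -(D_pos (set1_neq0 j)); congr D.
by have := @leq_card _ _ single inj; rewrite card_ord.
Qed.

Lemma adjV x y : adj k x y -> inV1 k y = ~~ inV1 k x.
Proof. by rewrite adjE => /andP [/eqP h _]; case: (inV1 k x) h; case: (inV1 k y). Qed.

Lemma from_full u w m : D u = setT -> ~~ inV1 k u -> u \in ball k w m ->
  forall v, v \in ball k w m.+2.
Proof.
move=> Du u2 ub v.
have adjU : forall X, inV1 k X -> adj k u X.
  move=> X X1; rewrite adjE (negbTE u2) X1 adjcondE Du.
  by apply/orP; right; apply: subsetT.
case: (boolP (inV1 k v)) => v1.
  by apply: ballS; apply: ball_step ub (adjU _ v1).
have [X /andP [X1 aX]] := nbr v.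
apply: ball_step (ball_step ub (adjU _ X1)) _.
by rewrite adjE X1 (negbTE v1).
Qed.

Lemma far u v : ~~ inV1 k u -> ~~ inV1 k v ->
  (forall x, adj k u x -> adj k x v -> False) -> v \notin ball k u 3.
Proof.
move=> u2 v2 nc.
have vu : v != u.
  apply/eqP => e; subst v.
  have [X /andP [X1 aX]] := nbr u.
  apply: (nc X); rewrite adjE ?X1 ?(negbTE u2) //=; by rewrite /adjcond orbC.
have nuv : forall x y, ~~ inV1 k x -> ~~ inV1 k y -> ~~ adj k x y.
  by move=> x y /negbTE x2 /negbTE y2; rewrite adjE x2 y2.
apply/negP; case/ball_inv => [H|[x xb a]].
  case/ball_inv: H => [H|[x xb a]].
    case/ball_inv: H => [/ball0E e|[x /ball0E -> a]].
      by rewrite e eqxx in vu.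
    by move: a; apply/negP; apply: nuv.
  case/ball_inv: xb => [/ball0E e|[x' /ball0E -> a']].
    by subst x; move: a; apply/negP; apply: nuv.
  exact: nc a' a.
have x1 : inV1 k x.
  by have := adjV a; case: (inV1 k x) => //=; rewrite (negbTE v2).
case/ball_inv: xb => [H|[x' x'b a']].
  case/ball_inv: H => [/ball0E e|[x' /ball0E -> a']].
    by subst x; rewrite x1 in u2.
  exact: nc a' a.
have x'2 : ~~ inV1 k x'.
  by have := adjV a'; rewrite x1; case: (inV1 k x').
case/ball_inv: x'b => [/ball0E e|[x'' /ball0E -> a'']].
  subst x'; exact: nc a' a.
by move: a''; apply/negP; apply: nuv.
Qed.

Definition o0 : 'I_n := @Ordinal n 0 (ltnW (ltnW hn)).

Lemma setT_neq0 : [set: 'I_n] != set0.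
Proof. by apply/set0Pn; exists o0; rewrite inE. Qed.

Definition Nv : V := mkpos setT_neq0.

Lemma Nv_V2 : inV1 k Nv = false.
Proof. by rewrite inV1_pos cardsT card_ord; apply/eqP; lia. Qed.

Lemma D_full v : #|val v| = n -> D v = setT.
Proof.
move=> h; apply/eqP; rewrite eqEcard (subsetT (D v)) /= cardsT card_ord card_D h //.
Qed.

Lemma cardV1 (X : V) : inV1 k X -> #|D X| = k.
Proof. by rewrite card_D => /andP [_ /eqP]. Qed.

Lemma card_V3 m : m <= 3 -> m < #|{: V}|.+1.
Proof. by move=> h; have := card_V; lia. Qed.

Lemma nc_of v w : ~~ inV1 k v ->
  (forall S : {set 'I_n}, #|S| = k -> (S \subset D v) || (D v \subset S) ->
      (S \subset D w) || (D w \subset S) -> False) ->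
  forall x, adj k v x -> adj k x w -> False.
Proof.
move=> v2 H x a1 a2.
have x1 : inV1 k x by rewrite (adjV a1) v2.
apply: (H (D x)); first exact: cardV1.
  by move: a1; rewrite adjE => /andP [_]; rewrite adjcondE orbC.
by move: a2; rewrite adjE => /andP [_]; rewrite adjcondE.
Qed.

Lemma ecc_V1 (X : V) : inV1 k X -> ecc k X = 3.
Proof.
move=> X1; apply/eqP; rewrite eqn_leq; apply/andP; split.
  apply: ecc_le; apply: (from_full (u := Nv)); first exact: D_pos.
    by rewrite Nv_V2.
  apply: ball_step (ball0 _) _.
  rewrite adjE X1 Nv_V2 adjcondE D_pos /=; by apply/orP; left; apply: subsetT.
have : ~: D X != set0.
  rewrite -card_gt0; have := cardsC (D X); rewrite card_ord cardV1 //; lia.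
case/set0Pn => j; rewrite inE => jX.
have na : ~~ adj k X (single j).
  rewrite adjE X1 single_V2 adjcondE D_pos /=; apply/norP; split.
    apply/negP => /subset_leq_card; rewrite cards1 cardV1 //; lia.
  by rewrite sub1set.
have v2 := single_V2 j.
apply: (ecc_gt (v := single j)); last exact: card_V3.
apply/negP; case/ball_inv => [H|[x xb a]].
  case/ball_inv: H => [/ball0E e|[x /ball0E -> a]].
    by move: v2; rewrite e X1.
  by rewrite a in na.
case/ball_inv: xb => [/ball0E e|[x' /ball0E -> a']].
  by subst x; rewrite a in na.
by move: (adjV a') (adjV a); rewrite X1 v2 => ->.
Qed.

Lemma ecc_full v : #|val v| = n -> ecc k v = 2.
Proof.
move=> hv.
have v2 : inV1 k v = false.
  by apply/negbTE/negP => /andP [_ /eqP]; lia.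
apply/eqP; rewrite eqn_leq; apply/andP; split.
  apply: ecc_le; apply: (from_full (u := v)); [exact: D_full | by rewrite v2 | exact: ball0].
apply: (ecc_gt (v := single o0)); last exact: card_V3.
apply/negP; case/ball_inv => [/ball0E e|[x /ball0E -> a]].
  by move: hv; rewrite -e card_pos cards1; lia.
by move: a; rewrite adjE v2 single_V2.
Qed.

Lemma ecc_mid v : ~~ inV1 k v -> #|val v| < n -> ecc k v = 4.
Proof.
move=> v2 hv.
apply/eqP; rewrite eqn_leq; apply/andP; split.
  apply: ecc_le; apply: (from_full (u := Nv)); first exact: D_pos.
    by rewrite Nv_V2.
  have [X /andP [X1 aX]] := nbr v.
  apply: ball_step (ball_step (ball0 _) (_ : adj k v X)) _.
    by rewrite adjE X1 (negbTE v2) /adjcond orbC.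
  rewrite adjE X1 Nv_V2 adjcondE D_pos /=; by apply/orP; left; apply: subsetT.
have cDv : #|D v| = #|val v| := card_D v.
case: (leqP k #|D v|) => hk.
  have : ~: D v != set0.
    rewrite -card_gt0; have := cardsC (D v); rewrite card_ord; lia.
  case/set0Pn => j; rewrite inE => jv.
  apply: (ecc_gt (v := single j)); last exact: card_V3.
  apply: far => //; first by rewrite single_V2.
  apply: nc_of => // S cS; rewrite D_pos.
  case/orP => [Sv|vS]; case/orP => [Sj|jS].
  - by move: (subset_leq_card Sj); rewrite cards1; lia.
  - by move: (subsetP Sv j); rewrite -sub1set jS => /(_ isT); rewrite (negbTE jv).
  - by move: (subset_leq_card Sj); rewrite cards1; lia.
  - have e : D v = S by apply/eqP; rewrite eqEcard vS cS.
    by move: jS; rewrite sub1set -e (negbTE jv).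
have : 1 < #|~: D v|.
  have := cardsC (D v); rewrite card_ord; lia.
case/exists_neg => w [Dw w2].
apply: (ecc_gt (v := w)); last exact: card_V3.
apply: far => //.
have [a aD] : exists a, a \in D v.
  by apply/set0Pn; rewrite -card_gt0 cDv cardv_ge.
apply: nc_of => // S cS; rewrite Dw.
case/orP => [Sv|vS].
  by move: (subset_leq_card Sv); lia.
case/orP => [Sc|cS'].
  by move: (subsetP Sc a (subsetP vS a aD)); rewrite inE aD.
have : [set: 'I_n] \subset S.
  apply/subsetP => i _; case: (boolP (i \in D v)) => iv.
    exact: (subsetP vS).
  by apply: (subsetP cS'); rewrite inE.
by move/subset_leq_card; rewrite cardsT card_ord; lia.
Qed.

Lemma ecc_val v : ecc k v = if inV1 k v then 3 else if #|val v| == n then 2 else 4.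
Proof.
case: (boolP (inV1 k v)) => v1; first exact: ecc_V1.
case: eqP => h; first exact: ecc_full.
by apply: ecc_mid => //; rewrite ltn_neqAle cardv_le andbT; apply/eqP.
Qed.

Lemma diam_val : diam n k = 4.
Proof.
apply/eqP; rewrite eqn_leq; apply/andP; split.
  apply/bigmax_leqP => v _; rewrite ecc_val; case: (inV1 k v) => //; by case: (_ == _).
have := @leq_bigmax _ (fun w => ecc k w) (single o0).
rewrite ecc_val single_V2 card_pos cards1.
by have -> : (1 == n) = false by apply/eqP; lia.
Qed.

Lemma rad_val : rad n k = 2.
Proof.
apply/eqP; rewrite eqn_leq; apply/andP; split.
  have e2 : ecc k Nv = 2 by rewrite ecc_full // card_pos cardsT card_ord.
  rewrite /rad -e2; have := mem_index_enum Nv.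
  elim: (index_enum _) => [//|a r IH]; rewrite inE big_cons /= => /orP [/eqP <-|h].
    exact: geq_minl.
  exact: leq_trans (geq_minr _ _) (IH h).
rewrite /rad; elim: (index_enum _) => [|a r IH].
  by rewrite big_nil; have := card_V; lia.
rewrite big_cons /= leq_min IH andbT ecc_val.
by case: (inV1 k a) => //; case: (_ == _).
Qed.

End Main.

Theorem mainTheorem14 (n k : nat) (hn : 2 < n) (hk1 : 1 < k) (hkn : k < n) :
  periphery n k = [set v : vtx n | inV2 k v & (1 <= #|val v| < n)] /\
  centre n k = [set v : vtx n | #|val v| == n] /\
  (forall v : vtx n, #|val v| = n -> inV2 k v).
Proof.
have h3 : forall v : vtx n, #|val v| = n -> inV2 k v.
  by move=> v hv; apply/negP => /andP [_ /eqP]; lia.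
split; last split => //.
  apply/setP => v; rewrite !inE (diam_val hn hk1 hkn) (ecc_val hn hk1 hkn) /inV2.
  rewrite (cardv_ge v) /=.
  case: (inV1 k v) => //=.
  case: (#|sval v| =P n) => [->|h]; first by rewrite ltnn.
  by rewrite ltn_neqAle cardv_le (introF eqP h).
apply/setP => v; rewrite !inE (rad_val hn hk1 hkn) (ecc_val hn hk1 hkn).
case: (boolP (inV1 k v)) => v1.
  have kn : (k == n) = false by apply/eqP; lia.
  by move: (v1) => /andP [_ /eqP ->]; rewrite kn.
by case: (#|sval v| == n).
Qed.
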